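(* Let $(\mathbb S,+,\cdot)$ be an S-Field. If $\alpha\in\mathbb S_0$ with $\alpha\neq 0$, then the Standard Base $q_0(\alpha)$ is Reversible, with $\alpha^*=\alpha^{-1}$; that is, $q_0(1)=\alpha^{-1}\cdot(q_0(\alpha)+\alpha)-\alpha$.
   Context: An S-Structure is a triple $(\mathbb S,+,\cdot)$ where $\mathbb S$ is a set and $+,\cdot$ are binary operations on $\mathbb S$ such that: $(\mathbb S,+)$ is a commutative group with identity $0$ (the inverse of $s$ is written $-s$, and $s-t:=s+(-t)$); $\mathbb S$ is closed under $\cdot$; and there exists $s\in\mathbb S$ with $0\cdot s\neq 0$ or $s\cdot 0\neq 0$. Multiplication binds tighter than addition. The structures considered come with a distinguished element of $\mathbb S$ denoted $1$. It is Commutative if $s\cdot t=t\cdot s$ for all $s,t$. For a Commutative S-Structure and $\alpha\in\mathbb S$, put $\mathbb S_\alpha=\{s\in\mathbb S:0\cdot s=s\cdot 0=\alpha\}$ and $\Lambda=\{\alpha\in\mathbb S:\mathbb S_\alpha\neq\emptyset\}$. Wheel Distributive: $s\cdot(t+r)+(s\cdot 0)=(s\cdot t)+(s\cdot r)$ for all $s,t,r\in\mathbb S$. S-Associative: for all $m,n\in\mathbb S_0$ and $s\in\mathbb S$, $m\cdot(n\cdot s)=(m\cdot n)\cdot s-([(m-1)\cdot(n-1)]\cdot(0\cdot s))$. Base: if $\mathbb S_0\neq\emptyset$ and $\alpha\in\Lambda$, $q\in\mathbb S_\alpha$ is a Base for $\mathbb S_\alpha$ if $q+\beta\in\mathbb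 S_\alpha$ for all $\beta\in\mathbb S_0$ and every $s\in\mathbb S_\alpha$ equals $q+\beta$ for some $\beta\in\mathbb S_0$. Coordinated: $\mathbb S_0\neq\emptyset$ and every $\mathbb S_\alpha$ with $\alpha\in\Lambda$ has a Base. Standard Bases: a Coordinated Commutative S-Structure has Standard Bases if there is a specified element $q_0(1)\in\mathbb S_1$ which is a Base for $\mathbb S_1$, and for every $\alpha\in\Lambda$ the element $q_0(\alpha):=\alpha\cdot(q_0(1)+1)-1$ (the Standard Base of $\mathbb S_\alpha$) lies in $\mathbb S_\alpha$ and is a Base for $\mathbb S_\alpha$. An Essential S-Structure is an S-Structure that is Commutative, Wheel Distributive, S-Associative, has Standard Bases (in particular is Coordinated), satisfies $0,1\in\mathbb S_0$, and satisfies $\mathbb S_0=\{1\cdot x:x\in\mathbb S_0\}$. A Unity is an element $e\in\Lambda$ with $e\cdot s=s\cdot e=s$ for all $s\in\mathbb S$. Scalar Inverses: the structure has a Unity $e$ and for every $x\in\mathbb S_0$ with $x\neq 0$ there is $x^{-1}\in\mathbb S_0$ with $x\cdot x^{-1}=x^{-1}\cdot x=e$. An S-Ring is an Essential S-Structure with a Unity; an S-Field is an S-Ring with Scalar Inverses. Reversible: in an Essential S-Structure, for $\alpha\in\Lambda$, the Standard Base $q_0(\alpha)$ is Reversible if there exists $\alpha^*\in\Lambda$ with $q_0(1)=\alpha^*\cdot(q_0(\alpha)+\alpha)-\alpha$. *)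

(* Defs.v *)
Set Implicit Arguments.

Record SOps (T : Type) := {
  sadd : T -> T -> T;
  sopp : T -> T;
  szero : T;
  smul : T -> T -> T;
  sone : T;
  sq01 : T
}.

Section Defs.
Variable T : Type.
Variable S : SOps T.

Local Notation "x + y" := (sadd S x y).
Local Notation "x * y" := (smul S x y).
Local Notation "0" := (szero S).
Local Notation "1" := (sone S).

Definition ssub (s t : T) : T := s + sopp S t.
Local Notation "x - y" := (ssub x y).

Definition is_SStructure : Prop :=
  (forall a b c, a + (b + c) = (a + b) + c) /\
  (forall a b, a + b = b + a) /\
  (forall a, 0 + a = a) /\
  (forall a, a + sopp S a = 0) /\
  (exists s, 0 * s <> 0 \/ s * 0 <> 0).

Definition is_Commutative : Prop := forall s t, s * t = t * s.

Definition Sset (alpha s : T) : Prop := 0 * s = alpha /\ s * 0 = alpha.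

Definition in_Lambda (alpha : T) : Prop := exists s, Sset alpha s.

Definition is_WheelDistributive : Prop :=
  forall s t r, s * (t + r) + (s * 0) = (s * t) + (s * r).

Definition is_SAssociative : Prop :=
  forall m n s, Sset 0 m -> Sset 0 n ->
    m * (n * s) = (m * n) * s - (((m - 1) * (n - 1)) * (0 * s)).

Definition is_Base (alpha q : T) : Prop :=
  Sset alpha q /\
  (forall beta, Sset 0 beta -> Sset alpha (q + beta)) /\
  (forall s, Sset alpha s -> exists beta, Sset 0 beta /\ s = q + beta).

Definition is_Coordinated : Prop :=
  (exists s, Sset 0 s) /\
  (forall alpha, in_Lambda alpha -> exists q, is_Base alpha q).

Definition q0 (alpha : T) : T := alpha * (sq01 S + 1) - 1.

Definition has_StandardBases : Prop :=
  is_Coordinated /\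
  is_Base 1 (sq01 S) /\
  (forall alpha, in_Lambda alpha -> is_Base alpha (q0 alpha)).

Definition is_Essential : Prop :=
  is_SStructure /\ is_Commutative /\ is_WheelDistributive /\
  is_SAssociative /\ has_StandardBases /\
  Sset 0 0 /\ Sset 0 1 /\
  (forall x, Sset 0 x <-> exists y, Sset 0 y /\ x = 1 * y).

Definition is_Unity (e : T) : Prop :=
  in_Lambda e /\ forall s, e * s = s /\ s * e = s.

Definition has_ScalarInverses (e : T) : Prop :=
  is_Unity e /\
  forall x, Sset 0 x -> x <> 0 ->
    exists y, Sset 0 y /\ x * y = e /\ y * x = e.

Definition is_SRing (e : T) : Prop := is_Essential /\ is_Unity e.

Definition is_SField (e : T) : Prop := is_SRing e /\ has_ScalarInverses e.

(* q_0(alpha) is Reversible (alpha in Lambda assumed by the paper's definition) *)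
Definition is_Reversible (alpha : T) : Prop :=
  exists astar, in_Lambda astar /\
    sq01 S = astar * (q0 alpha + alpha) - alpha.

End Defs.

(* Main.v *)
Require Import Defs.

Section G.
Variable T : Type.
Variable S : SOps T.
Local Notation "x + y" := (sadd S x y).
Local Notation "- x" := (sopp S x).
Local Notation "0" := (szero S).
Hypothesis addA : forall a b c, a + (b + c) = (a + b) + c.
Hypothesis addC : forall a b, a + b = b + a.
Hypothesis add0 : forall a, 0 + a = a.
Hypothesis addN : forall a, a + - a = 0.

Lemma add0r a : a + 0 = a.
Proof. rewrite addC; auto. Qed.

Lemma opp_uniq a b : a + b = 0 -> b = - a.
Proof.
  intro H. transitivity ((- a + a) + b).
  - rewrite (addC (-a) a), addN, add0. reflexivity.
  - rewrite <- addA, H, add0r. reflexivity.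
Qed.

Lemma oppK a : - - a = a.
Proof. symmetry. apply opp_uniq. rewrite addC. apply addN. Qed.

Lemma oppD a b : - (a + b) = - a + - b.
Proof.
  symmetry. apply opp_uniq.
  rewrite addA. rewrite (addC a b). rewrite <- (addA b a). rewrite addN, add0r. apply addN.
Qed.

Lemma final_id q o a b :
  (((q + o) + - ((o + - a) + - (b + - o))) + - b) + o + - a = q.
Proof.
  rewrite !oppD, !oppK.
  rewrite !addA.
  assert (sw : forall x y z, x + y + z = x + z + y).
  { intros. rewrite <- !addA, (addC y z). reflexivity. }
  assert (cn : forall x y, x + y + - y = x).
  { intros. rewrite <- addA, addN, add0r. reflexivity. }
  rewrite cn.
  rewrite (sw (q + a + b)), cn.
  rewrite <- (addA (q + a) (- o) o), (addC (- o) o), addN, add0r.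
  rewrite cn. reflexivity.
Qed.
End G.

Theorem proposition4p2p1 (T : Type) (S : SOps T) (e : T) :
  is_SField S e ->
  forall alpha : T, Sset S (szero S) alpha -> alpha <> szero S ->
  forall alpha_inv : T,
    Sset S (szero S) alpha_inv ->
    smul S alpha alpha_inv = e -> smul S alpha_inv alpha = e ->
    is_Reversible S alpha /\
    in_Lambda S alpha_inv /\
    sq01 S = ssub S (smul S alpha_inv (sadd S (q0 S alpha) alpha)) alpha.
Proof.
  intros [[[[addA [addC [add0 [addN _]]]] [Comm [WD [SA [[_ [[Hq _] _]] [S00 [S01 _]]]]]]] [[s0 [Hs0a Hs0b]] Hu]] _].
  intros a Ha _ ai Hai Haai Haia.
  unfold ssub in *.
  assert (add0r : forall x, sadd S x (szero S) = x) by (intro; apply add0r; auto).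
  assert (Z0 : forall x y, Sset S (szero S) x -> Sset S (szero S) y -> Sset S (szero S) (sadd S x y)).
  { intros x y [Hx1 Hx2] [Hy1 Hy2].
    assert (H : smul S (szero S) (sadd S x y) = (szero S)).
    { pose proof (WD (szero S) x y) as W. 
      rewrite Hx1, Hy1, (proj1 S00), !add0r in W. exact W. }
    split; [exact H | rewrite Comm; exact H]. }
  assert (ZN : forall x, Sset S (szero S) x -> Sset S (szero S) (sopp S x)).
  { intros x [Hx1 Hx2].
    assert (H : smul S (szero S) (sopp S x) = (szero S)).
    { pose proof (WD (szero S) x (sopp S x)) as W. 
      rewrite addN, (proj1 S00), Hx1, add0r, add0 in W. symmetry; exact W. }
    split; [exact H | rewrite Comm; exact H]. }
  assert (mD : forall m t r, Sset S (szero S) m -> smul S m (sadd S t r) = sadd S (smul S m t) (smul S m r)).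
  { intros m t r [Hm1 Hm2]. pose proof (WD m t r) as W. 
    rewrite Hm2, add0r in W. exact W. }
  assert (mN : forall m t, Sset S (szero S) m -> smul S m (sopp S t) = sopp S (smul S m t)).
  { intros m t Hm. apply opp_uniq with (S := S); auto.
    rewrite <- mD by exact Hm. rewrite addN. apply Hm. }
  assert (He0 : smul S (szero S) e = (szero S)) by (rewrite Comm; apply Hu).
  assert (Hoe : (sone S) = e).
  { pose proof (SA (sone S) (szero S) s0 S01 S00) as X. unfold ssub in X. 
    rewrite Hs0a, (proj2 S01), Hs0a, addN in X.
    assert (Hm : Sset S (szero S) (sadd S (szero S) (sopp S (sone S)))) by (apply Z0; auto).
    rewrite (proj1 Hm), He0 in X.
    replace (sopp S (szero S)) with (szero S) in X by (apply opp_uniq with (S:=S); auto; apply add0r).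
    rewrite add0r in X. rewrite <- X. rewrite Comm. symmetry. apply Hu. }
  rewrite <- Hoe in Hs0a, Hs0b, Hu, Haai, Haia, He0.
  assert (lam : in_Lambda S ai).
  { exists (smul S ai s0).
    assert (H : smul S (szero S) (smul S ai s0) = ai).
    { pose proof (SA (szero S) ai s0 S00 Hai) as X1. pose proof (SA ai (szero S) s0 Hai S00) as X2. unfold ssub in X1, X2.
      
      rewrite (proj1 Hai), Hs0a in X1. rewrite (proj2 Hai), Hs0a in X2.
      rewrite (proj2 (Hu ai)) in X2.
      rewrite X1; etransitivity; [| symmetry; exact X2]. f_equal. f_equal. f_equal. apply Comm. }
    split; [exact H | rewrite Comm; exact H]. }
  assert (goal : (sq01 S) = sadd S (smul S ai (sadd S (sadd S (smul S a (sadd S (sq01 S) (sone S))) (sopp S (sone S))) a)) (sopp S a)).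
  { rewrite mD, mD by exact Hai.
    rewrite (mN ai (sone S) Hai). rewrite Haia.
    rewrite (SA ai a (sadd S (sq01 S) (sone S)) Hai Ha). unfold ssub. 
    rewrite Haia, (proj1 (Hu _)).
    assert (Hz1 : smul S (szero S) (sadd S (sq01 S) (sone S)) = (sone S)).
    { pose proof (WD (szero S) (sq01 S) (sone S)) as W. 
      rewrite (proj1 S00), (proj1 Hq), (proj1 S01), !add0r in W. exact W. }
    rewrite Hz1. rewrite (proj2 (Hu _)).
    assert (Hm : Sset S (szero S) (sadd S ai (sopp S (sone S)))) by (apply Z0; auto).
    rewrite (mD _ _ _ Hm), (mN _ _ Hm), (proj2 (Hu _)).
    rewrite (Comm (sadd S ai (sopp S (sone S))) a). 
    rewrite (mD _ _ _ Ha), (mN _ _ Ha), Haai, (proj2 (Hu _)).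
    rewrite (Comm ai (sone S)). rewrite (proj1 (Hu _)).
    symmetry. apply final_id; auto. }
  split; [exists ai; split; assumption | split; assumption].
Qed.
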